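(* Let $k\in\mathbb N$ and let $f:\Xi_k\to\mathbb R$ satisfy $\mathfrak a^\dagger_{k-1}f=0$. Then $$\mathcal E_{\alpha,k}(f)\ge k\Big(\inf_{\xi\in\Xi_{k-1}}\mathrm{gap}_{\rm RW}(\alpha+\xi)\Big)\,\mathrm{Var}_{\alpha,k}(f).$$
   Context: $V$ is a finite set with symmetric non-negative weights $c_{xy}=c_{yx}\ge0$ forming a connected graph, $\alpha=(\alpha_x)_{x\in V}$ positive, $|\alpha|=\sum_x\alpha_x$. $\Xi_k:=\{\eta\in\mathbb N_0^V:\sum_x\eta_x=k\}$. $\mu_{\alpha,k}(\eta)\propto\prod_x\frac{\Gamma(\alpha_x+\eta_x)}{\Gamma(\alpha_x)\eta_x!}$ is a probability on $\Xi_k$, $\langle f,g\rangle_{\alpha,k}=\sum_\eta\mu_{\alpha,k}(\eta)f(\eta)g(\eta)$, $\mathrm{Var}_{\alpha,k}(f)=\langle f,f\rangle_{\alpha,k}-\langle f,1\rangle_{\alpha,k}^2$. $L_kf(\eta)=\sum_x\eta_x\sum_yc_{xy}(\alpha_y+\eta_y)(f(\eta-\delta_x+\delta_y)-f(\eta))$ ($\eta-\delta_x+\delta_y$: move a particle from $x$ to $y$) and $\mathcal E_{\alpha,k}(f)=\langle f,-L_kf\rangle_{\alpha,k}$. The creation operator is $\mathfrak a^\dagger_{k-1}f(\xi)=\sum_x(\xi_x+\alpha_x)f(\xi+\delta_x)$ for $\xi\in\Xi_{k-1}$. For any positive weight vector $\beta=(\beta_x)_{x\in V}$, $\mathrm{gap}_{\rm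 RW}(\beta)$ is the smallest nonzero eigenvalue of $-A_\beta$, where $A_\beta\phi(x)=\sum_yc_{xy}\beta_y(\phi(y)-\phi(x))$; here $\alpha+\xi$ is the vector $(\alpha_x+\xi_x)_{x\in V}$. *)

(* Defs.v *)
From HB Require Import structures.
From mathcomp Require Import all_boot all_order all_algebra.
From mathcomp Require Import boolp classical_sets reals.
Set Implicit Arguments. Unset Strict Implicit. Unset Printing Implicit Defensive.
Import Order.TTheory GRing.Theory Num.Theory.
Local Open Scope ring_scope.

Section Defs.
Variables (R : realType) (V : finType).

Definition conf := {ffun V -> nat}.

Definition nparts (eta : conf) : nat := (\sum_x eta x)%N.

(* sum of F over Xi_k = {eta | sum_x eta_x = k}, enumerated via the finite
   type of configurations bounded by k (a bijection onto Xi_k) *)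
Definition sumXi (k : nat) (F : conf -> R) : R :=
  \sum_(e : {ffun V -> 'I_k.+1} | (\sum_x (e x : nat) == k)%N)
     F [ffun x => (e x : nat)].

Definition move (eta : conf) (x y : V) : conf :=
  [ffun z => (eta z - (z == x) + (z == y))%N].
Definition add1 (xi : conf) (x : V) : conf := [ffun z => (xi z + (z == x))%N].

(* Gamma(a + n) / Gamma(a) = a (a+1) ... (a+n-1)  (rising factorial) *)
Definition rising (a : R) (n : nat) : R := \prod_(i < n) (a + i%:R).

Variables (c : V -> V -> R) (alpha : V -> R).

(* unnormalized weight prod_x Gamma(alpha_x + eta_x) / (Gamma(alpha_x) eta_x!) *)
Definition weight (eta : conf) : R :=
  \prod_x (rising (alpha x) (eta x) / (eta x)`!%:R).

Definition mu (k : nat) (eta : conf) : R := weight eta / sumXi k weight.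

Definition inner (k : nat) (f g : conf -> R) : R :=
  sumXi k (fun eta => mu k eta * f eta * g eta).

Definition Var (k : nat) (f : conf -> R) : R :=
  inner k f f - (inner k f (fun _ => 1)) ^+ 2.

Definition gen (f : conf -> R) (eta : conf) : R :=
  \sum_x (eta x)%:R * \sum_y c x y * (alpha y + (eta y)%:R)
                         * (f (move eta x y) - f eta).

Definition energy (k : nat) (f : conf -> R) : R :=
  inner k f (fun eta => - gen f eta).

Definition creation (f : conf -> R) (xi : conf) : R :=
  \sum_x ((xi x)%:R + alpha x) * f (add1 xi x).

Definition Arw (beta : V -> R) (phi : V -> R) (x : V) : R :=
  \sum_y c x y * beta y * (phi y - phi x).

Definition eig_negA (beta : V -> R) (lam : R) : Prop :=
  exists phi : V -> R, (exists x, phi x != 0) /\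
    forall x, - Arw beta phi x = lam * phi x.

Definition gapRW (beta : V -> R) : R :=
  inf [set lam | eig_negA beta lam /\ lam != 0].

Definition connected_graph : Prop :=
  forall x y : V, connect (fun u v => c u v != 0) x y.

End Defs.

(* Main.v *)
Require Import Defs.
From HB Require Import structures.
From mathcomp Require Import all_boot all_order all_algebra.
From mathcomp Require Import boolp classical_sets reals.
From mathcomp Require Import complex spectral sesquilinear.
From mathcomp Require Import ring lra.
Import Order.TTheory GRing.Theory Num.Theory.
Local Open Scope ring_scope.
Local Open Scope classical_set_scope.

Module SpecM.
Set Implicit Arguments. Unset Strict Implicit. Unset Printing Implicit Defensive.
Local Open Scope complex_scope.
Local Open Scope sesquilinear_scope.

Section Cx.
Variable R : rcfType.
Implicit Types (z w : R[i]) (x : R).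
Lemma ReD z w : complex.Re (z + w) = complex.Re z + complex.Re w. Proof. case: z => a b; case: w => c d; reflexivity. Qed.
Lemma ImD z w : complex.Im (z + w) = complex.Im z + complex.Im w. Proof. case: z => a b; case: w => c d; reflexivity. Qed.
Lemma ReCM x z : complex.Re (x%:C * z) = x * complex.Re z.
Proof. by case: z => a b /=; rewrite mul0r subr0. Qed.
Lemma ImCM x z : complex.Im (x%:C * z) = x * complex.Im z.
Proof. by case: z => a b /=; rewrite mul0r addr0. Qed.
Lemma ReMC x z : complex.Re (z * x%:C) = complex.Re z * x.
Proof. by rewrite mulrC ReCM mulrC. Qed.
Lemma ImMC x z : complex.Im (z * x%:C) = complex.Im z * x.
Proof. by rewrite mulrC ImCM mulrC. Qed.
Lemma ReJ z : complex.Re (Num.conj_op z) = complex.Re z. Proof. by case: z. Qed.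
Lemma ImJ z : complex.Im (Num.conj_op z) = - complex.Im z. Proof. by case: z. Qed.
Lemma Re_sum n (F : 'I_n -> R[i]) : complex.Re (\sum_k F k) = \sum_k complex.Re (F k).
Proof. by apply: (big_morph (@complex.Re R)) => //; exact: ReD. Qed.
Lemma Im_sum n (F : 'I_n -> R[i]) : complex.Im (\sum_k F k) = \sum_k complex.Im (F k).
Proof. by apply: (big_morph (@complex.Im R)) => //; exact: ImD. Qed.
Lemma conj_real x : Num.conj_op (x%:C) = x%:C.
Proof. exact: conjc_real. Qed.
End Cx.

Notation cRe := (@complex.Re _).
Notation cIm := (@complex.Im _).

Section SpecBound.
Variables (R : rcfType) (n : nat) (S : 'M[R]_n).
Hypothesis Ssym : S^T = S.
Local Notation toC := (map_mx (real_complex R)).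

Lemma spec_bound (g : R)
 (hg : forall (l : R) (v : 'rV[R]_n), v != 0 -> v *m S = l *: v -> l != 0 -> g <= l)
 (psi : 'rV[R]_n) (hker : forall v : 'rV[R]_n, v *m S = 0 -> (v *m psi^T) 0 0 = 0) :
 g * (psi *m psi^T) 0 0 <= (psi *m S *m psi^T) 0 0.
Proof.
set SC := toC S.
have SCsym : SC \is symmetricmx.
  by apply/is_hermitianmxP; rewrite expr0 scale1r map_mx_id // /SC map_trmx Ssym.
have SCreal : SC \is a realmx.
  by apply/mxOverP => i j; rewrite mxE; apply/complex_realP; eexists.
have SCh := realsym_hermsym SCsym SCreal.
have /orthomx_spectralP hP := hermitian_normalmx SCh.
have dreal := hermitian_spectral_diag_real SCh.
move: hP dreal; set P := spectralmx SC; set d := spectral_diag SC => hP dreal.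
have Pu : P \is unitarymx := spectral_unitarymx SC.
have PPt : P *m P^t* = 1%:M := unitarymxP Pu.
have PtP : P^t* *m P = 1%:M.
  by rewrite -invmx_unitary // mulVmx // spectral_unit.
have PS : P *m SC = diag_mx d *m P.
  by rewrite {1}hP invmx_unitary // !mulmxA PPt mul1mx.
have entry i j : \sum_k P i k * (S k j)%:C = d 0 i * P i j.
  move/matrixP: PS => /(_ i j); rewrite mul_diag_mx !mxE => <-.
  by apply: eq_bigr => k _; rewrite mxE.
have dR i : d 0 i = (cRe (d 0 i))%:C.
  by rewrite RRe_real //; apply: (mxOverP dreal).
have eigRe i : (\row_j cRe (P i j)) *m S = cRe (d 0 i) *: \row_j cRe (P i j).
  apply/rowP => j; rewrite !mxE.
  have := congr1 cRe (entry i j); rewrite Re_sum [d 0 i]dR ReCM => <-.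
  by apply: eq_bigr => k _; rewrite mxE ReMC.
have eigIm i : (\row_j cIm (P i j)) *m S = cRe (d 0 i) *: \row_j cIm (P i j).
  apply/rowP => j; rewrite !mxE.
  have := congr1 cIm (entry i j); rewrite Im_sum [d 0 i]dR ImCM => <-.
  by apply: eq_bigr => k _; rewrite mxE ImMC.
have rownz i : exists v : 'rV[R]_n, v != 0 /\ v *m S = cRe (d 0 i) *: v.
  case: (boolP (\row_j cRe (P i j) == 0)) => [/eqP ha|ha]; last by exists (\row_j cRe (P i j)).
  case: (boolP (\row_j cIm (P i j) == 0)) => [/eqP hb|hb]; last by exists (\row_j cIm (P i j)).
  exfalso.
  have : (P *m P^t*) i i = 1 by rewrite PPt mxE eqxx.
  rewrite mxE big1 => [/eqP|k _]; first by rewrite eq_sym oner_eq0.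
  move/rowP: ha => /(_ k); move/rowP: hb => /(_ k); rewrite !mxE => hb ha.
  have -> : P i k = 0 by apply/eqP; rewrite eq_complex ha hb /= eqxx.
  by rewrite mul0r.
set w := toC psi *m P^t*.
have psiC : toC psi = w *m P by rewrite /w -mulmxA PtP mulmx1.
have tC : (toC psi)^t* = (toC psi)^T.
  by apply/matrixP => a b; rewrite !mxE conj_real.
have e1 : ((psi *m psi^T) 0 0)%:C = (w *m w^t*) 0 0.
  transitivity ((toC psi *m (toC psi)^t*) 0 0).
    by rewrite tC map_trmx -map_mxM [in RHS]mxE.
  by rewrite psiC trmx_mul map_mxM mulmxA -(mulmxA w) PPt mulmx1.
have e2 : ((psi *m S *m psi^T) 0 0)%:C = (w *m diag_mx d *m w^t*) 0 0.
  transitivity ((toC psi *m SC *m (toC psi)^t*) 0 0).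
    by rewrite tC map_trmx -!map_mxM [in RHS]mxE.
  rewrite psiC trmx_mul map_mxM hP invmx_unitary // !mulmxA.
  by rewrite -(mulmxA w P) PPt mulmx1 -(mulmxA _ P) PPt mulmx1.
have wE : w = toC psi *m P^t* by []. clearbody w.
rewrite -lecR.
have -> : (g * (psi *m psi^T) 0 0)%:C = g%:C * ((psi *m psi^T) 0 0)%:C by rewrite rmorphM.
rewrite e1 e2 mul_mx_diag !mxE mulr_sumr; apply: ler_sum => j _.
rewrite !mxE.
case: (boolP (d 0 j == 0)) => [/eqP d0|dn0].
  have hw : w 0 j = 0.
    have ha := eigRe j; rewrite d0 /= scale0r in ha.
    have hb := eigIm j; rewrite d0 /= scale0r in hb.
    move: (hker _ ha) (hker _ hb); rewrite !mxE => ha' hb'.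
    apply/eqP; rewrite eq_complex wE ?mxE Re_sum Im_sum; apply/andP; split.
      rewrite -[X in _ == X]ha'; apply/eqP/eq_bigr => k _.
      by rewrite !mxE ReCM ReJ mulrC.
    rewrite -[X in _ == X]oppr0 -[X in _ == - X]hb' -sumrN; apply/eqP/eq_bigr => k _.
    by rewrite !mxE ImCM ImJ mulrC mulNr.
  by rewrite hw !(mul0r, mulr0).
have [v [vn0 hv]] := rownz j.
have rn0 : cRe (d 0 j) != 0.
  by apply: contraNneq dn0 => h; rewrite [d 0 j]dR h.
have hgl := hg _ _ vn0 hv rn0.
rewrite [d 0 j]dR mulrAC mulrC; apply: ler_wpM2l; first exact: mulcJ_ge0.
by rewrite lecR.
Qed.
End SpecBound.

End SpecM.
Import SpecM.

Module PoincM.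
Set Implicit Arguments. Unset Strict Implicit. Unset Printing Implicit Defensive.

Section Poinc.
Variables (R : realType) (V : finType) (c : V -> V -> R) (beta : V -> R).
Hypotheses (c_sym : forall x y, c x y = c y x) (c_ge0 : forall x y, 0 <= c x y)
  (c_conn : connected_graph c) (beta_gt0 : forall x, 0 < beta x).

Definition Dform (u : V -> R) :=
  \sum_x beta x * u x * \sum_y c x y * beta y * (u x - u y).

Lemma negA u x : - Arw c beta u x = \sum_y c x y * beta y * (u x - u y).
Proof. by rewrite /Arw -sumrN; apply: eq_bigr => y _; rewrite -mulrN opprB. Qed.

Lemma DformA u : Dform u = \sum_x beta x * u x * - Arw c beta u x.
Proof. by apply: eq_bigr => x _; rewrite negA. Qed.

Lemma Dsym u : Dform u *+ 2 =
  \sum_x \sum_y beta x * c x y * beta y * (u x - u y) ^+ 2.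
Proof.
have h1 : Dform u = \sum_x \sum_y beta x * c x y * beta y * (u x * (u x - u y)).
  by apply: eq_bigr => x _; rewrite mulr_sumr; apply: eq_bigr => y _; ring.
have h2 : Dform u = \sum_x \sum_y beta x * c x y * beta y * (u y * (u y - u x)).
  rewrite h1 exchange_big /=; apply: eq_bigr => x _; apply: eq_bigr => y _.
  by rewrite (c_sym y x); ring.
rewrite mulr2n {1}h1 h2 -big_split /=; apply: eq_bigr => x _.
by rewrite -big_split /=; apply: eq_bigr => y _; ring.
Qed.

Lemma D_ge0 u : 0 <= Dform u.
Proof.
have : 0 <= Dform u *+ 2.
  rewrite Dsym; apply: sumr_ge0 => x _; apply: sumr_ge0 => y _.
  apply: mulr_ge0; last exact: sqr_ge0.
  by apply: mulr_ge0; [apply: mulr_ge0|]; rewrite ?c_ge0 ?ltW.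
by rewrite mulr2n; lra.
Qed.

Lemma D_eq0 u : Dform u = 0 -> forall x y, u x = u y.
Proof.
move=> D0.
have h : forall x y, c x y != 0 -> u x = u y.
  move=> x y cn0.
  have S0 : \sum_x \sum_y beta x * c x y * beta y * (u x - u y) ^+ 2 = 0.
    by rewrite -Dsym D0 mul0rn.
  have ge0 : forall x y, 0 <= beta x * c x y * beta y * (u x - u y) ^+ 2.
    move=> a b; apply: mulr_ge0; last exact: sqr_ge0.
    by apply: mulr_ge0; [apply: mulr_ge0|]; rewrite ?c_ge0 ?ltW.
  have Hx := psumr_eq0P (fun a _ => sumr_ge0 _ (fun b _ => ge0 a b)) S0.
  have := @psumr_eq0P _ _ xpredT _ (fun b _ => ge0 x b) (Hx x isT) y isT.
  move/eqP; rewrite !mulf_eq0 (negbTE cn0) !(gt_eqF (beta_gt0 _)) /= orbb.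
  by rewrite subr_eq0 => /eqP.
move=> x y.
have cl : closed (fun a b => c a b != 0) [pred z | u z == u x].
  by move=> a b /h hab; rewrite !inE hab.
have := closed_connect cl (c_conn x y); rewrite !inE eqxx => /esym/eqP.
by [].
Qed.

Lemma eig_ge0 l : eig_negA c beta l -> 0 <= l.
Proof.
case=> phi [[x0 hx0] h].
have hs : 0 < \sum_x beta x * phi x ^+ 2.
  rewrite (bigD1 x0) //=; apply: ltr_pwDl.
    by apply: mulr_gt0 => //; rewrite lt_def sqr_ge0 sqrf_eq0 hx0.
  by apply: sumr_ge0 => y _; apply: mulr_ge0; rewrite ?sqr_ge0 ?ltW.
rewrite -(pmulr_lge0 _ hs) mulr_sumr.
have := D_ge0 phi; rewrite DformA; congr (_ <= _).
by apply: eq_bigr => x _; rewrite h; ring.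
Qed.

Lemma gap_ge0 : 0 <= gapRW c beta.
Proof.
rewrite /gapRW; set E := [set lam | _].
have [->|ne] := eqVneq E set0; first by rewrite inf0.
apply: lb_le_inf; first exact/set0P.
by move=> l [hl _]; exact: eig_ge0.
Qed.

Lemma gap_le l : eig_negA c beta l -> l != 0 -> gapRW c beta <= l.
Proof.
move=> hl ln0; apply: ge_inf; last by split.
by exists 0 => m [hm _]; exact: eig_ge0.
Qed.

Lemma sumV (F : V -> R) : \sum_x F x = \sum_(i < #|V|) F (enum_val i).
Proof. exact: big_enum_val. Qed.

Local Notation ev := (@enum_val V _).
Local Notation er := (@enum_rank V).
Local Notation sb := (fun x => Num.sqrt (beta x)).
Definition dg x := \sum_y c x y * beta y.

Lemma sb_gt0 x : 0 < sb x. Proof. by rewrite sqrtr_gt0. Qed.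
Lemma sbsb x : sb x * sb x = beta x.
Proof. by rewrite -expr2 sqr_sqrtr // ltW. Qed.

Definition Smx : 'M[R]_#|V| :=
  \matrix_(i, j) ((ev i == ev j)%:R * dg (ev i) - sb (ev i) * c (ev i) (ev j) * sb (ev j)).
Definition vrow (u : V -> R) : 'rV[R]_#|V| := \row_i (sb (ev i) * u (ev i)).

Lemma vS u : vrow u *m Smx = \row_j (sb (ev j) * - Arw c beta u (ev j)).
Proof.
apply/rowP => j; rewrite !mxE.
under eq_bigr do rewrite !mxE.
rewrite -(sumV (fun x => sb x * u x * ((x == ev j)%:R * dg x - sb x * c x (ev j) * sb (ev j)))).
rewrite negA mulr_sumr.
under eq_bigr do rewrite mulrBr.
rewrite sumrB (bigD1 (ev j)) //= eqxx mul1r big1 => [|x /negbTE ->]; last by rewrite mul0r mulr0.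
rewrite addr0 /dg.
rewrite mulr_sumr -sumrB; apply: eq_bigr => y _.
rewrite (c_sym y (ev j)).
move: (sbsb y); set s := Num.sqrt (beta y) => hs; rewrite -hs; ring.
Qed.
Lemma quadS u w : (vrow u *m Smx *m (vrow w)^T) 0 0 = \sum_x beta x * w x * - Arw c beta u x.
Proof.
rewrite vS mxE (sumV (fun x => beta x * w x * - Arw c beta u x)).
apply: eq_bigr => i _; rewrite !mxE.
by move: (sbsb (ev i)); set s := Num.sqrt _ => hs; rewrite -hs; ring.
Qed.

Lemma quad1 u w : (vrow u *m (vrow w)^T) 0 0 = \sum_x beta x * u x * w x.
Proof.
rewrite mxE (sumV (fun x => beta x * u x * w x)).
apply: eq_bigr => i _; rewrite !mxE.
by move: (sbsb (ev i)); set s := Num.sqrt _ => hs; rewrite -hs; ring.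
Qed.

Lemma Smx_sym : Smx^T = Smx.
Proof.
apply/matrixP => i j; rewrite !mxE (c_sym (ev j)) eq_sym.
case: (eqVneq (ev i) (ev j)) => [->|_] /=; first by rewrite mulrC.
by rewrite !mul0r !sub0r; congr (- _); ring.
Qed.

Lemma vrowE (v : 'rV[R]_#|V|) : v = vrow (fun x => v 0 (er x) / sb x).
Proof.
apply/rowP => i; rewrite !mxE enum_valK mulrC divfK //.
exact: lt0r_neq0 (sb_gt0 _).
Qed.

Lemma eigS u l : vrow u *m Smx = l *: vrow u -> forall x, - Arw c beta u x = l * u x.
Proof.
rewrite vS => h x; move/rowP: h => /(_ (er x)); rewrite !mxE enum_rankK mulrCA.
by move/(mulfI (lt0r_neq0 (sb_gt0 x))).
Qed.

Lemma poincare phi (hmean : \sum_x beta x * phi x = 0) :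
  gapRW c beta * \sum_x beta x * phi x ^+ 2 <= Dform phi.
Proof.
have := @spec_bound R #|V| Smx Smx_sym (gapRW c beta) _ (vrow phi) _.
rewrite quad1 quadS -DformA.
have -> : \sum_x beta x * phi x * phi x = \sum_x beta x * phi x ^+ 2.
  by apply: eq_bigr => x _; rewrite expr2 mulrA.
apply.
  move=> l v vn0; rewrite [v]vrowE => hv ln0.
  apply: gap_le => //; exists (fun x => v 0 (er x) / sb x); split; last exact: eigS.
  have [i vi] : exists i, v 0 i != 0.
    apply/existsP; apply: contraNT vn0 => /existsPn h.
    by apply/eqP/rowP => i; rewrite mxE; apply/eqP; move: (h i); rewrite negbK.
  exists (ev i); rewrite enum_valK mulf_neq0 // invr_neq0 //.
  exact: lt0r_neq0 (sb_gt0 _).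
move=> v; rewrite [v]vrowE; set u := fun x => _ => hv.
have hA : forall x, - Arw c beta u x = 0.
  by move=> x; rewrite (eigS (l := 0)) ?mul0r // scale0r.
have D0 : Dform u = 0.
  by rewrite DformA big1 // => x _; rewrite hA mulr0.
have uc := D_eq0 D0.
rewrite quad1; case: (pickP (@predT V)) => [x0 _|h0].
  transitivity (u x0 * \sum_x beta x * phi x); last by rewrite hmean mulr0.
  rewrite mulr_sumr; apply: eq_bigr => x _.
  by rewrite (uc x x0); ring.
by apply: big1 => x _; have := h0 x.
Qed.
End Poinc.

End PoincM.
Import PoincM.

Module CombM.
Set Implicit Arguments. Unset Strict Implicit. Unset Printing Implicit Defensive.

Section Comb.
Variables (R : realType) (V : finType) (alpha : V -> R).
Hypothesis alpha_gt0 : forall x, 0 < alpha x.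

Definition enumXi (k : nat) : seq (conf V) :=
  [seq [ffun x => (e x : nat)] | e : {ffun V -> 'I_k.+1} <- enum [pred e : {ffun V -> 'I_k.+1} | (\sum_x (e x : nat) == k)%N]].

Lemma sumXiE k (F : conf V -> R) : sumXi k F = \sum_(eta <- enumXi k) F eta.
Proof. rewrite /sumXi big_map big_enum /=. by apply: eq_bigl => e; rewrite inE. Qed.

Lemma uniq_enumXi k : uniq (enumXi k).
Proof.
rewrite map_inj_uniq ?enum_uniq // => e e' /ffunP h.
by apply/ffunP => x; apply: val_inj; have := h x; rewrite !ffunE.
Qed.

Lemma le_nparts (eta : conf V) x : (eta x <= nparts eta)%N.
Proof. by rewrite /nparts (bigD1 x) //= leq_addr. Qed.

Lemma mem_enumXi k eta : (eta \in enumXi k) = (nparts eta == k).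
Proof.
apply/mapP/idP => [[e]|/eqP he].
  rewrite mem_enum inE => /eqP he ->; rewrite /nparts -[X in _ == X]he.
  by apply/eqP/eq_bigr => x _; rewrite ffunE.
have hle x : (eta x < k.+1)%N by rewrite ltnS -he le_nparts.
exists [ffun x => Ordinal (hle x)].
  rewrite mem_enum inE; apply/eqP; rewrite -[RHS]he /nparts.
  by apply: eq_bigr => x _; rewrite ffunE.
by apply/ffunP => x; rewrite !ffunE.
Qed.

Lemma nparts_add1 (xi : conf V) x : nparts (add1 xi x) = (nparts xi).+1.
Proof.
rewrite /nparts; under eq_bigr do rewrite ffunE.
rewrite big_split /= -addn1; congr addn.
by rewrite (bigD1 x) //= eqxx big1 => [|z /negbTE -> //].
Qed.

Lemma add1_inj x : injective (fun xi : conf V => add1 xi x).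
Proof.
move=> a b /ffunP h; apply/ffunP => z; have := h z; rewrite !ffunE.
by move/addIn.
Qed.

Lemma shift j x (G : conf V -> R) :
  \sum_(eta <- enumXi j.+1 | (0 < eta x)%N) G eta = \sum_(xi <- enumXi j) G (add1 xi x).
Proof.
rewrite -big_filter -(big_map (fun xi : conf V => add1 xi x) xpredT G); apply: perm_big.
apply: uniq_perm; first by rewrite filter_uniq // uniq_enumXi.
  by rewrite map_inj_uniq ?uniq_enumXi //; exact: add1_inj.
move=> eta; rewrite mem_filter mem_enumXi; apply/andP/mapP => [[hx /eqP hn]|[xi]].
  exists [ffun z => (eta z - (z == x))%N].
    rewrite mem_enumXi; apply/eqP/eq_add_S; rewrite -hn -(nparts_add1 _ x); congr nparts.
    apply/ffunP => z; rewrite !ffunE; case: (eqVneq z x) => [->|] /=.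
      by rewrite subn1 addn1 prednK.
    by rewrite subn0 addn0.
  apply/ffunP => z; rewrite !ffunE; case: (eqVneq z x) => [->|] /=.
    by rewrite subn1 addn1 prednK.
  by rewrite subn0 addn0.
rewrite mem_enumXi => /eqP hn ->; split; first by rewrite ffunE eqxx addn1.
by rewrite nparts_add1 hn.
Qed.

Lemma rising_ge0 (a : R) n : 0 < a -> 0 < rising a n.
Proof.
move=> ha; rewrite /rising; apply: prodr_gt0 => i _.
by apply: ltr_wpDr.
Qed.

Lemma weight_ge0 eta : 0 <= weight alpha eta.
Proof.
apply: prodr_ge0 => x _; apply: divr_ge0; last exact: ler0n.
exact/ltW/rising_ge0.
Qed.

Lemma weight_add1 (xi : conf V) x :
  weight alpha (add1 xi x) * ((add1 xi x) x)%:R = weight alpha xi * (alpha x + (xi x)%:R).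
Proof.
rewrite /weight (bigD1 x) //= [in RHS](bigD1 x) //=.
have -> : \prod_(z | z != x) (rising (alpha z) (add1 xi x z) / (add1 xi x z)`!%:R) =
          \prod_(z | z != x) (rising (alpha z) (xi z) / (xi z)`!%:R).
  by apply: eq_bigr => z /negbTE hz; rewrite ffunE hz addn0.
rewrite ffunE eqxx addn1 /rising big_ord_recr /= factS natrM.
have h1 : (xi x).+1%:R != 0 :> R by rewrite pnatr_eq0.
have h2 : (xi x)`!%:R != 0 :> R by rewrite pnatr_eq0 -lt0n fact_gt0.
move: h1 h2; set m := (xi x).+1%:R; set f := (xi x)`!%:R; move=> h1 h2.
set P1 := \prod_(i < xi x) _; set P2 := \prod_(z | z != x) _.
clearbody m f P1 P2.
by field; rewrite h1 h2.
Qed.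

Lemma reindexL j (H : conf V -> V -> R) :
  \sum_(eta <- enumXi j.+1) \sum_x (eta x)%:R * weight alpha eta * H eta x =
  \sum_(xi <- enumXi j) \sum_x weight alpha xi * (alpha x + (xi x)%:R) * H (add1 xi x) x.
Proof.
rewrite exchange_big /= [RHS]exchange_big /=; apply: eq_bigr => x _.
rewrite (bigID (fun eta : conf V => (0 < eta x)%N)) /= [X in _ + X]big1 => [|eta].
  rewrite addr0 shift; apply: eq_bigr => xi _.
  by rewrite -weight_add1 [in LHS](mulrC _ (weight _ _)).
by rewrite -eqn0Ngt => /eqP ->; rewrite !mul0r.
Qed.
End Comb.

End CombM.
Import CombM.
Unset Implicit Arguments.


Lemma move_add1 (V : finType) (xi : conf V) x y : move (add1 xi x) x y = add1 xi y.
Proof. by apply/ffunP => z; rewrite !ffunE addnK. Qed.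

Lemma add1_neq (V : finType) (xi : conf V) x y : y != x -> add1 xi x y = xi y.
Proof. by move=> h; rewrite ffunE (negbTE h) addn0. Qed.

Theorem lemma3p3 (R : realType) (V : finType) (c : V -> V -> R) (alpha : V -> R)
  (c_sym : forall x y, c x y = c y x) (c_ge0 : forall x y, 0 <= c x y)
  (c_conn : connected_graph c) (alpha_gt0 : forall x, 0 < alpha x)
  (k : nat) (k_gt0 : (0 < k)%N) (f : conf V -> R)
  (hf : forall xi : conf V, nparts xi = k.-1 -> creation alpha f xi = 0) :
  k%:R * inf [set gapRW c (fun x => alpha x + (xi x)%:R)
                | xi in [set xi : conf V | nparts xi = k.-1]]
    * Var alpha k f
  <= energy c alpha k f.
Proof.
case: k k_gt0 hf => // k' _ /= hf.
pose w := weight alpha.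
pose Z := sumXi k'.+1 w.
have Z0 : 0 <= Z by rewrite /Z sumXiE; apply: sumr_ge0 => e _; exact: weight_ge0.
have bpos (xi : conf V) x : 0 < alpha x + (xi x)%:R.
  by have := alpha_gt0 x; have := ler0n R (xi x); lra.
have kk (F : conf V -> R) : k'.+1%:R * \sum_(e <- enumXi V k'.+1) w e * F e =
    \sum_(xi <- enumXi V k') \sum_x w xi * (alpha x + (xi x)%:R) * F (add1 xi x).
  rewrite -(reindexL alpha k' (fun e _ => F e)) mulr_sumr !big_seq; apply: eq_bigr => e.
  rewrite mem_enumXi => /eqP he.
  by rewrite -mulr_suml -mulr_suml -natr_sum -/(nparts e) he mulrA.
have innerE (g : conf V -> R) :
    inner alpha k'.+1 f g = Z^-1 * \sum_(e <- enumXi V k'.+1) w e * (f e * g e).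
  rewrite /inner /mu sumXiE mulr_sumr; apply: eq_bigr => e _.
  by rewrite /Z /w; ring.
have mean0 : \sum_(e <- enumXi V k'.+1) w e * f e = 0.
  have : k'.+1%:R * \sum_(e <- enumXi V k'.+1) w e * f e = 0.
    rewrite kk big_seq big1 // => xi; rewrite mem_enumXi => /eqP hxi.
    transitivity (w xi * creation alpha f xi); last by rewrite hf // mulr0.
    rewrite /creation mulr_sumr; apply: eq_bigr => x _.
    by rewrite (addrC (_%:R)) mulrA.
  by move/eqP; rewrite mulf_eq0 pnatr_eq0 /= => /eqP.
have energyE : energy c alpha k'.+1 f = Z^-1 * \sum_(xi <- enumXi V k')
    w xi * Dform c (fun x => alpha x + (xi x)%:R) (fun x => f (add1 xi x)).
  rewrite /energy innerE; congr (_ * _).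
  transitivity (\sum_(e <- enumXi V k'.+1) \sum_x (e x)%:R * w e *
     (f e * \sum_y c x y * (alpha y + (e y)%:R) * (f e - f (move e x y)))).
    apply: eq_bigr => e _; rewrite /gen -sumrN mulr_sumr mulr_sumr.
    apply: eq_bigr => x _.
    have hs : - \sum_y c x y * (alpha y + (e y)%:R) * (f (move e x y) - f e) =
      \sum_y c x y * (alpha y + (e y)%:R) * (f e - f (move e x y)).
      by rewrite -sumrN; apply: eq_bigr => y _; rewrite -mulrN opprB.
    by rewrite -mulrN hs; ring.
  rewrite reindexL; apply: eq_bigr => xi _; rewrite /Dform mulr_sumr; apply: eq_bigr => x _.
  have -> : \sum_y c x y * (alpha y + (add1 xi x y)%:R) *
      (f (add1 xi x) - f (move (add1 xi x) x y)) =
      \sum_y c x y * (alpha y + (xi y)%:R) * (f (add1 xi x) - f (add1 xi y)).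
    apply: eq_bigr => y _; rewrite move_add1.
    have [->|hne] := eqVneq y x; first by rewrite subrr !mulr0.
    by rewrite add1_neq.
  by rewrite /w; ring.
have varE : Var alpha k'.+1 f = Z^-1 * \sum_(e <- enumXi V k'.+1) w e * f e ^+ 2.
  rewrite /Var !innerE.
  have -> : \sum_(e <- enumXi V k'.+1) w e * (f e * 1) = 0.
    by rewrite -[RHS]mean0; apply: eq_bigr => e _; rewrite mulr1.
  rewrite mulr0 expr0n /= subr0; congr (_ * _).
have NE : k'.+1%:R * \sum_(e <- enumXi V k'.+1) w e * f e ^+ 2 =
    \sum_(xi <- enumXi V k') w xi * \sum_x (alpha x + (xi x)%:R) * f (add1 xi x) ^+ 2.
  rewrite (kk (fun e => f e ^+ 2)); apply: eq_bigr => xi _.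
  by rewrite mulr_sumr; apply: eq_bigr => x _; ring.
rewrite varE energyE.
set G := inf _.
have G_le xi : xi \in enumXi V k' -> G <= gapRW c (fun x => alpha x + (xi x)%:R).
  rewrite mem_enumXi => /eqP hxi; apply: ge_inf; last by exists xi.
  by exists 0 => y [xi' _ <-]; exact: gap_ge0 (bpos xi').
have -> : k'.+1%:R * G * (Z^-1 * \sum_(e <- enumXi V k'.+1) w e * f e ^+ 2) =
    Z^-1 * (G * (k'.+1%:R * \sum_(e <- enumXi V k'.+1) w e * f e ^+ 2)) by ring.
rewrite NE mulr_sumr; apply: ler_wpM2l; first by rewrite invr_ge0.
rewrite !big_seq; apply: ler_sum => xi hxi.
rewrite mulrCA; apply: ler_wpM2l; first exact: weight_ge0.
have hmean : \sum_x (alpha x + (xi x)%:R) * f (add1 xi x) = 0.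
  move: hxi; rewrite mem_enumXi => /eqP /hf hc.
  rewrite -[RHS]hc /creation; apply: eq_bigr => x _; by rewrite addrC.
apply: le_trans (poincare c_sym c_ge0 c_conn (bpos xi) hmean).
apply: ler_wpM2r; last exact: G_le.
by apply: sumr_ge0 => x _; apply: mulr_ge0; [exact: ltW|exact: sqr_ge0].
Qed.
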